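(* Assume $b,f,g$ are bounded and uniformly continuous in all variables. If $A$ is compact, then $\mathbb H(\theta)=\mathbb H_0(\theta)$ for all $\theta\in\mathbb X$.
   Context: Fix integers $d,N\ge 1$ and $T>0$. For $i=1,\dots,N$, $A_i$ is a domain in some Euclidean space and $A:=A_1\times\cdots\times A_N$. For $a\in A$ and $\tilde a_i\in A_i$, $(a^{-i},\tilde a_i)$ denotes $a$ with its $i$-th component replaced by $\tilde a_i$. Data: $b:[0,T]\times\mathbb R^d\times A\to\mathbb R^d$, $f:[0,T]\times\mathbb R^d\times A\to\mathbb R^N$, $g:\mathbb R^d\to\mathbb R^N$. Let $\mathbb X:=[0,T]\times\mathbb R^d\times\mathbb R^{dN}$ with elements $\theta=(t,x,z)$, $z=(z^1,\dots,z^N)$, $z^i\in\mathbb R^d$, and $\theta^i:=(t,x,z^i)$. Set $h_i(t,x,z^i,a):=f_i(t,x,a)+b(t,x,a)\cdot z^i$ and $h(\theta,a):=(h_1(\theta^1,a),\dots,h_N(\theta^N,a))$. For $\varepsilon\ge 0$, $\mathcal E_\varepsilon(\theta)$ is the set of $a\in A$ with $h_i(\theta^i,a)\ge h_i(\theta^i,(a^{-i},\tilde a_i))-\varepsilon$ for all $i$ and all $\tilde a_i\in A_i$; $\mathcal E(\theta):=\mathcal E_0(\theta)$. Define $\mathbb H_0(\theta):=\{h(\theta,a^* ):a^*\in\mathcal E(\theta)\}$, $\mathbb H_\varepsilon(\theta):=\{y\in\mathbb R^N:|y-h(\theta,a)|<\varepsilon\text{ for some }a\in\mathcal E_\varepsilon(\theta)\}$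 for $\varepsilon>0$, and $\mathbb H(\theta):=\bigcap_{\varepsilon>0}\mathbb H_\varepsilon(\theta)$. *)

(* Defs.v *)
From HB Require Import structures.
From mathcomp Require Import all_boot all_order all_algebra.
From mathcomp Require Import all_classical all_reals all_analysis.
Unset Printing Implicit Defensive.
Import Order.TTheory GRing.Theory Num.Theory.
Import numFieldNormedType.Exports.
Local Open Scope classical_set_scope.
Local Open Scope ring_scope.

Section Game.
Variable R : realType.

Definition dotv {n : nat} (u v : 'rV[R]_n) : R := \sum_(j < n) u 0 j * v 0 j.
Definition euclid {n : nat} (u : 'rV[R]_n) : R := Num.sqrt (\sum_(j < n) u 0 j ^+ 2).

Variables (d N : nat) (m : 'I_N -> nat).

Definition prof := forall i : 'I_N, 'rV[R]_(m i).

Variable Aset : forall i : 'I_N, set 'rV[R]_(m i).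

Definition Aprod : set prof := [set a | forall i, Aset i (a i)].

Variables (b : R -> 'rV[R]_d -> prof -> 'rV[R]_d)
          (f : R -> 'rV[R]_d -> prof -> 'rV[R]_N).

Definition hi (t : R) (x : 'rV[R]_d) (z : 'I_N -> 'rV[R]_d) (i : 'I_N) (a : prof) : R :=
  f t x a 0 i + dotv (b t x a) (z i).

Definition hvec t x z (a : prof) : 'rV[R]_N := \row_(i < N) hi t x z i a.

(* E_eps(theta); (a^{-i}, at) is  dfwith a at *)
Definition Eeps (eps : R) t x z : set prof :=
  [set a | Aprod a /\ forall (i : 'I_N) (ai : 'rV[R]_(m i)), Aset i ai ->
       hi t x z i (@dfwith _ (fun j : 'I_N => 'rV[R]_(m j)) a i ai) - eps <= hi t x z i a].

Definition H0 t x z : set 'rV[R]_N :=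
  [set y | exists a, Eeps 0 t x z a /\ y = hvec t x z a].

Definition Heps (eps : R) t x z : set 'rV[R]_N :=
  [set y | exists a, Eeps eps t x z a /\ euclid (y - hvec t x z a) < eps].

Definition Hset t x z : set 'rV[R]_N :=
  [set y | forall eps : R, 0 < eps -> Heps eps t x z y].

End Game.

Arguments prof R {N} m.
Arguments Aprod {R N m} Aset.
Arguments hi {R d N m} b f t x z i a.
Arguments hvec {R d N m} b f t x z a.
Arguments Eeps {R d N m} Aset b f eps t x z.
Arguments H0 {R d N m} Aset b f t x z.
Arguments Heps {R d N m} Aset b f eps t x z.
Arguments Hset {R d N m} Aset b f t x z.

Definition bounded_on_TxA (R : realType) (d N n : nat) (m : 'I_N -> nat)
  (Aset : forall i : 'I_N, set 'rV[R]_(m i)) (T : R)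
  (phi : R -> 'rV[R]_d -> prof R m -> 'rV[R]_n) : Prop :=
  exists M : R, forall t x a, 0 <= t <= T -> Aprod Aset a -> `|phi t x a| <= M.

Definition unif_cont_on_TxA (R : realType) (d N n : nat) (m : 'I_N -> nat)
  (Aset : forall i : 'I_N, set 'rV[R]_(m i)) (T : R)
  (phi : R -> 'rV[R]_d -> prof R m -> 'rV[R]_n) : Prop :=
  forall e : R, 0 < e -> exists2 del : R, 0 < del &
    forall t t' x x' a a', 0 <= t <= T -> 0 <= t' <= T ->
      Aprod Aset a -> Aprod Aset a' ->
      `|t - t'| < del -> `|x - x'| < del -> (forall i, `|a i - a' i| < del) ->
      `|phi t x a - phi t' x' a'| < e.

Arguments bounded_on_TxA {R d N n m} Aset T phi.
Arguments unif_cont_on_TxA {R d N n m} Aset T phi.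

(* Main.v *)
Require Import Defs.
From HB Require Import structures.
From mathcomp Require Import all_boot all_order all_algebra.
From mathcomp Require Import all_classical all_reals all_analysis.
From mathcomp Require Import lra ring.
Import Order.TTheory GRing.Theory Num.Theory.
Import numFieldNormedType.Exports.
Local Open Scope classical_set_scope.
Local Open Scope ring_scope.

Lemma mx_coord_le {R : realType} {p q} (M : 'M[R]_(p,q)) i j : `|M i j| <= `|M|.
Proof.
have -> : `|M| = mx_norm M by [].
rewrite mx_normrE.
exact: (le_bigmax 0 (fun ij : 'I_p * 'I_q => `|M ij.1 ij.2|) (i, j)).
Qed.

Lemma coord_euclid {R : realType} {n} (w : 'rV[R]_n) i : `|w 0 i| <= euclid R w.
Proof.
rewrite /euclid -sqrtr_sqr ler_sqrt; last by apply: sumr_ge0 => k _; exact: sqr_ge0.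
rewrite (bigD1 i) //= lerDl; apply: sumr_ge0 => k _; exact: sqr_ge0.
Qed.

Lemma small_inv {R : realType} (e : R) : 0 < e ->
  exists K : nat, forall n, (K <= n)%N -> n.+1%:R^-1 < e.
Proof.
move=> e0.
have ie : 0 <= e^-1 by rewrite invr_ge0 ltW.
have := archi_boundP ie.
set K := Num.Def.archi_bound _ => HK.
exists K => n Kn.
rewrite invf_plt ?posrE //.
apply: (lt_le_trans HK); by rewrite ler_nat leqW.
Qed.

Lemma Aprod_dfwith (R : realType) N (m : 'I_N -> nat)
  (Aset : forall i : 'I_N, set 'rV[R]_(m i)) (a : prof R m) i ai :
  Aprod Aset a -> Aset i ai ->
  Aprod Aset (@dfwith _ (fun j : 'I_N => 'rV[R]_(m j)) a i ai).
Proof.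
move=> Aa Ai j; case: (eqVneq i j) => [<-|nij].
  by rewrite dfwithin.
by rewrite dfwithout.
Qed.

Lemma hi_cont (R : realType) (d N : nat) (T : R) (m : 'I_N -> nat)
  (Aset : forall i : 'I_N, set 'rV[R]_(m i))
  (b : R -> 'rV[R]_d -> prof R m -> 'rV[R]_d)
  (f : R -> 'rV[R]_d -> prof R m -> 'rV[R]_N) t x z i :
  unif_cont_on_TxA Aset T b -> unif_cont_on_TxA Aset T f -> 0 <= t <= T ->
  forall e : R, 0 < e -> exists2 del : R, 0 < del &
    forall a a', Aprod Aset a -> Aprod Aset a' -> (forall j, `|a j - a' j| < del) ->
    `|hi b f t x z i a - hi b f t x z i a'| < e.
Proof.
move=> ucb ucf ht e e0.
set S := \sum_k `|z i 0 k|.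
have S0 : 0 <= S by apply: sumr_ge0 => k _.
have e2 : 0 < e / 2 by rewrite divr_gt0.
have S1 : 0 < S + 1 by rewrite ltr_wpDl.
have e3 : 0 < e / 2 / (S + 1) by rewrite divr_gt0.
have [d1 d1p H1] := ucf _ e2.
have [d2 d2p H2] := ucb _ e3.
exists (Num.min d1 d2); first by rewrite lt_min d1p d2p.
move=> a a' Aa Aa' Hj.
have tt1 : `|t - t| < d1 by rewrite subrr normr0.
have tt2 : `|t - t| < d2 by rewrite subrr normr0.
have xx1 : `|x - x| < d1 by rewrite subrr normr0.
have xx2 : `|x - x| < d2 by rewrite subrr normr0.
have mn1 : Num.min d1 d2 <= d1 by rewrite ge_min lexx.
have mn2 : Num.min d1 d2 <= d2 by rewrite ge_min lexx orbT.
have Hf := H1 t t x x a a' ht ht Aa Aa' tt1 xx1 (fun j => lt_le_trans (Hj j) (mn1)).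
have Hb := H2 t t x x a a' ht ht Aa Aa' tt2 xx2 (fun j => lt_le_trans (Hj j) (mn2)).
set w := b t x a - b t x a'.
have Edot : dotv R (b t x a) (z i) - dotv R (b t x a') (z i) = dotv R w (z i).
  rewrite /dotv -sumrB; apply: eq_bigr => k _; by rewrite !mxE mulrBl.
have Hdot : `|dotv R w (z i)| <= `|w| * S.
  rewrite /dotv mulr_sumr; apply: le_trans (ler_norm_sum _ _ _) _.
  apply: ler_sum => k _; rewrite normrM; apply: ler_wpM2r => //; exact: mx_coord_le.
have HwS : `|w| * S < e / 2.
  apply: (le_lt_trans (y := `|w| * (S + 1))).
    by apply: ler_wpM2l => //; rewrite lerDl.
  by rewrite -ltr_pdivlMr.
have Hf0 : `|f t x a 0 i - f t x a' 0 i| < e / 2.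
  apply: le_lt_trans Hf; have := mx_coord_le (f t x a - f t x a') 0 i.
  by rewrite !mxE.
rewrite /hi.
have -> : f t x a 0 i + dotv R (b t x a) (z i) - (f t x a' 0 i + dotv R (b t x a') (z i))
  = (f t x a 0 i - f t x a' 0 i) + dotv R w (z i).
  by rewrite -Edot; ring.
apply: (le_lt_trans (ler_normD _ _)).
have -> : e = e / 2 + e / 2 by field.
apply: ltrD => //; exact: le_lt_trans Hdot HwS.
Qed.

Theorem proposition2p6 (R : realType) (d N : nat) (hd : (1 <= d)%N) (hN : (1 <= N)%N)
  (T : R) (hT : 0 < T) (m : 'I_N -> nat) (Aset : forall i : 'I_N, set 'rV[R]_(m i))
  (b : R -> 'rV[R]_d -> prof R m -> 'rV[R]_d)
  (f : R -> 'rV[R]_d -> prof R m -> 'rV[R]_N)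
  (g : 'rV[R]_d -> 'rV[R]_N) :
  bounded_on_TxA Aset T b -> unif_cont_on_TxA Aset T b ->
  bounded_on_TxA Aset T f -> unif_cont_on_TxA Aset T f ->
  (exists M : R, forall x, `|g x| <= M) ->
  (forall e : R, 0 < e -> exists2 del : R, 0 < del &
     forall x x', `|x - x'| < del -> `|g x - g x'| < e) ->
  @compact (prod_topology (fun i : 'I_N => 'rV[R]_(m i))) (Aprod Aset) ->
  forall (t : R) (x : 'rV[R]_d) (z : 'I_N -> 'rV[R]_d), 0 <= t <= T ->
    Hset Aset b f t x z = H0 Aset b f t x z.
Proof.
move=> _ ucb _ ucf _ _ cA t x z ht.
apply/seteqP; split => y; last first.
  move=> [a [Ea ->]] e e0; exists a; split.
    split; first exact: Ea.1.
    move=> i ai Ai; have := Ea.2 i ai Ai; rewrite subr0 => H.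
    apply: le_trans H; rewrite lerBlDr lerDl; exact: ltW.
  rewrite subrr /euclid big1 ?sqrtr0 // => k _; by rewrite mxE expr0n.
move=> Hy.
have : forall n : nat, exists a, Eeps Aset b f n.+1%:R^-1 t x z a /\
   euclid R (y - hvec b f t x z a) < n.+1%:R^-1.
  by move=> n; apply: Hy; rewrite invr_gt0 ltr0n.
move/choice => [an Han].
pose F := (fmap an \oo : set_system (prod_topology (fun i : 'I_N => 'rV[R]_(m i)))).
have FA : F (Aprod Aset) by exists 0%N => // n _; exact: (Han n).1.1.
have [astar [Aa Cl]] := cA F _ FA.
have freq : forall (K : nat) (Q : set (prod_topology (fun i : 'I_N => 'rV[R]_(m i)))),
    nbhs astar Q -> exists n, (K <= n)%N /\ Q (an n).
  move=> K Q HQ.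
  have FP : F (an @` [set n | (K <= n)%N]) by exists K => // n Kn; exists n.
  have [_ [[n Kn <-] Qa]] := Cl _ Q FP HQ.
  by exists n.
have nb : forall del : R, 0 < del ->
    nbhs astar [set a : prod_topology (fun i : 'I_N => 'rV[R]_(m i)) | forall j, `|a j - astar j| < del].
  move=> del del0.
  apply: (@filter_forall _ _ (fun j => [set a : prod_topology (fun i : 'I_N => 'rV[R]_(m i)) | `|a j - astar j| < del]) (nbhs astar) _) => j.
  have nbj : nbhs (astar j) [set v : 'rV[R]_(m j) | `|v - astar j| < del].
    apply/nbhs_ballP; exists del => //= v; rewrite -ball_normE /= distrC; exact.
  exact: (@proj_continuous 'I_N (fun i => 'rV[R]_(m i)) j astar _ nbj).
have Hc := fun i => @hi_cont R d N T m Aset b f t x z i ucb ucf ht.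
have hy : y = hvec b f t x z astar.
  apply/rowP => i; apply/eqP; rewrite -subr_eq0 -normr_le0.
  apply/ler_addgt0Pr => e e0; rewrite add0r.
  have e2 : 0 < e / 2 by rewrite divr_gt0.
  have [del del0 Hdel] := Hc i _ e2.
  have [K HK] := small_inv _ e2.
  have [n [Kn Qn]] := freq K _ (nb _ del0).
  have H1 := Hdel (an n) astar (Han n).1.1 Aa Qn.
  have H2 := coord_euclid (y - hvec b f t x z (an n)) i.
  have H3 := lt_trans (le_lt_trans H2 (Han n).2) (HK n Kn).
  rewrite !mxE in H3 *.
  apply: ltW.
  have -> : y 0 i - hi b f t x z i astar = (y 0 i - hi b f t x z i (an n)) + (hi b f t x z i (an n) - hi b f t x z i astar) by ring.
  apply: le_lt_trans (ler_normD _ _) _.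
  have -> : e = e / 2 + e / 2 by field.
  exact: ltrD.
exists astar; split => //; split => // i ai Ai; rewrite subr0.
apply/ler_addgt0Pr => e e0.
have e3 : 0 < e / 3 by rewrite divr_gt0.
have [del del0 Hdel] := Hc i _ e3.
have [K HK] := small_inv _ e3.
have [n [Kn Qn]] := freq K _ (nb _ del0).
have Adn := @Aprod_dfwith R N m Aset (an n) i ai (Han n).1.1 Ai.
have Ads := @Aprod_dfwith R N m Aset astar i ai Aa Ai.
have Hd : forall j, `|@dfwith _ (fun j : 'I_N => 'rV[R]_(m j)) (an n) i ai j -
                      @dfwith _ (fun j : 'I_N => 'rV[R]_(m j)) astar i ai j| < del.
  move=> j; case: (eqVneq i j) => [<-|nij].
    by rewrite !dfwithin subrr normr0.
  by rewrite !dfwithout //; exact: Qn.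
have H1 := Hdel _ _ Adn Ads Hd.
have H2 := Hdel _ _ (Han n).1.1 Aa Qn.
have H3 := (Han n).1.2 i ai Ai.
have H4 := HK n Kn.
move: H1 H2; rewrite !ltr_norml => /andP[H1a H1b] /andP[H2a H2b].
move: H1a H2b H3 H4.
move: (hi b f t x z i (dfwith (an n) i ai)) (hi b f t x z i (dfwith astar i ai)) (hi b f t x z i (an n)) (hi b f t x z i astar) (n.+1%:R^-1 : R) => p q r s u.
clear Hdel HK H1b H2a; move: e e0 e3 => e' _ _.
lra.
Qed.
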